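(* Assume the standing setting below and run the DMFW algorithm with $\eta_k=\frac{2}{k+2}$ (and any $\gamma_k\in(0,1]$). Then for every $i\in\mathcal N$ and $k\ge1$, $$\|\hat x_{k+1}^i-\hat x_k^i\|\le\frac{2(D+2C_1)}{k+2},\qquad C_1=k_0\sqrt nD.$$
   Context: Setting. There are $n$ agents $\mathcal N=\{1,\dots,n\}$ connected by a connected graph $\mathcal G=(\mathcal N,\mathcal E)$ with weight matrix $C=[c_{ij}]\in\mathbb R^{n\times n}$, where $c_{ij}\ge 0$ and $c_{ij}=0$ whenever $j\ne i$ and $(i,j)\notin\mathcal E$. $C$ is doubly stochastic, i.e. all row sums and all column sums equal $1$. Let $\lambda$ be the second largest eigenvalue of $C$ in magnitude. It is assumed that $|\lambda|<1$ and that for all vectors $x^1,\dots,x^n\in\mathbb R^p$, with $\bar x=\frac1n\sum_i x^i$ and $\hat x^i=\sum_j c_{ij}x^j$, one has $\big(\sum_i\|\hat x^i-\bar x\|^2\big)^{1/2}\le|\lambda|\big(\sum_i\|x^i-\bar x\|^2\big)^{1/2}$. Let $k_0$ be the smallest positive integer with $|\lambda|\le (k_0/(k_0+1))^2$. Problem data. $\mathcal X\subset\mathbb R^p$ is convex and compact with diameter $D$, i.e. $\|x-x'\|\le D$ for all $x,x'\in\mathcal X$. For each $i$, $\xi^i$ is a random variable. The function $f_i(\cdot,\xi)$ is differentiable with $L$-Lipschitz gradient for every $\xi$. $F_i(x)=\mathbb E[f_i(x,\xi^i)]$ is differentiable with $\nabla F_i(x)=\mathbb E[\nabla f_i(x,\xi^i)]$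 and $L$-Lipschitz gradient. For all $x\in\mathcal X$ and $i$, $\mathbb E\|\nabla F_i(x)-\nabla f_i(x,\xi^i)\|^2\le\delta^2$. Set $F=\frac1n\sum_{i=1}^nF_i$. DMFW algorithm. Fix step sizes $\gamma_k,\eta_k\in(0,1]$ and deterministic initial points $x_1^i\in\mathcal X$. The samples $\xi_k^i$ ($k\ge1$, $i\in\mathcal N$) are mutually independent, and $\xi_k^i$ has the distribution of $\xi^i$. For $k=1,2,\dots$ and each $i$: - $\hat x_k^i=\sum_{j=1}^n c_{ij}x_k^j$. - For $k=1$: $y_1^i=s_1^i=\nabla f_i(\hat x_1^i,\xi_1^i)$. For $k\ge2$: $y_k^i=(1-\gamma_k)y_{k-1}^i+\nabla f_i(\hat x_k^i,\xi_k^i)-(1-\gamma_k)\nabla f_i(\hat x_{k-1}^i,\xi_k^i)$ and $s_k^i=\sum_j c_{ij}s_{k-1}^j+y_k^i-y_{k-1}^i$. - $p_k^i=\sum_j c_{ij}s_k^j$. - $\theta_k^i\in\arg\min_{\phi\in\mathcal X}\langle p_k^i,\phi\rangle$. - $x_{k+1}^i=\hat x_k^i+\eta_k(\theta_k^i-\hat x_k^i)$. Notation: $\bar x_k=\frac1n\sum_i x_k^i$. *)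

(* Defs.v *)
From HB Require Import structures.
From mathcomp Require Import all_boot all_order all_algebra.
From mathcomp Require Import all_classical all_reals all_analysis.
From mathcomp Require Import complex.
Import Order.TTheory GRing.Theory Num.Theory.
Import numFieldNormedType.Exports.

Set Implicit Arguments.
Unset Strict Implicit.
Unset Printing Implicit Defensive.

Local Open Scope ring_scope.

Section DMFWDefs.
Variable R : realType.

Definition enorm (p : nat) (v : 'rV[R]_p) : R :=
  Num.sqrt (\sum_(j < p) v 0 j ^+ 2).

Definition dotv (p : nat) (u v : 'rV[R]_p) : R :=
  \sum_(j < p) u 0 j * v 0 j.

Definition doubly_stochastic (n : nat) (C : 'M[R]_n) : Prop :=
  (forall i j, 0 <= C i j) /\
  (forall i, \sum_(j < n) C i j = 1) /\
  (forall j, \sum_(i < n) C i j = 1).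

Definition connected_graph (n : nat) (E : rel 'I_n) : Prop :=
  (forall i j, E i j = E j i) /\ (forall i j, connect E i j).

Definition supported_on (n : nat) (C : 'M[R]_n) (E : rel 'I_n) : Prop :=
  forall i j, j != i -> ~~ E i j -> C i j = 0.

(* m is the modulus |lambda| of the second largest (in modulus) eigenvalue
   of C, eigenvalues counted with algebraic multiplicity (roots of the
   characteristic polynomial of C viewed as a complex matrix). *)
Definition second_eig_modulus (n : nat) (C : 'M[R]_n) (m : R) : Prop :=
  exists rs : seq R[i],
    char_poly (map_mx (fun r : R => (r%:C)%C) C) = \prod_(z <- rs) ('X - z%:P)
    /\ m = nth 0 (sort (fun a b : R => b <= a) (map (@Normc.normc R) rs)) 1.

Definition mixv (n p : nat) (C : 'M[R]_n) (z : 'I_n -> 'rV[R]_p) (i : 'I_n)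
  : 'rV[R]_p := \sum_(j < n) C i j *: z j.

Definition avgv (n p : nat) (z : 'I_n -> 'rV[R]_p) : 'rV[R]_p :=
  n%:R^-1 *: \sum_(i < n) z i.

Definition consensus_err (n p : nat) (z : 'I_n -> 'rV[R]_p) (zbar : 'rV[R]_p)
  : R := Num.sqrt (\sum_(i < n) enorm (z i - zbar) ^+ 2).

End DMFWDefs.

(* Main.v *)
Require Import Defs.
From HB Require Import structures.
From mathcomp Require Import all_boot all_order all_algebra.
From mathcomp Require Import all_classical all_reals all_analysis.
From mathcomp Require Import complex.
From mathcomp Require Import ring lra.
Import Order.TTheory GRing.Theory Num.Theory.
Import numFieldNormedType.Exports.
Local Open Scope ring_scope.

Section Aux.
Context {R : realType}.

Lemma cs_sq (I : finType) (a b : I -> R) :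
  (\sum_i a i * b i) ^+ 2 <= (\sum_i a i ^+ 2) * (\sum_i b i ^+ 2).
Proof.
set A := \sum_i a i ^+ 2; set B := \sum_i b i ^+ 2; set P := \sum_i a i * b i.
have H0 : 0 <= \sum_i \sum_j (a i * b j - a j * b i) ^+ 2.
  by apply: sumr_ge0 => i _; apply: sumr_ge0 => j _; exact: sqr_ge0.
have E : \sum_i \sum_j (a i * b j - a j * b i) ^+ 2 = 2 * (A * B - P ^+ 2).
  transitivity (\sum_i (a i ^+ 2 * B + b i ^+ 2 * A - 2 * (a i * b i) * P)).
    apply: eq_bigr => i _.
    rewrite /A /B /P !mulr_sumr -!big_split -sumrB; apply: eq_bigr => j _.
    rewrite /=; ring.
  rewrite sumrB big_split /= -!mulr_suml -/A -/B -/P -mulr_sumr -/P. ring.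
lra.
Qed.

Lemma minkowski (I : finType) (a b : I -> R) :
  Num.sqrt (\sum_i (a i + b i) ^+ 2)
    <= Num.sqrt (\sum_i a i ^+ 2) + Num.sqrt (\sum_i b i ^+ 2).
Proof.
set A := \sum_i a i ^+ 2; set B := \sum_i b i ^+ 2; set P := \sum_i a i * b i.
have A0 : 0 <= A by apply: sumr_ge0 => i _; exact: sqr_ge0.
have B0 : 0 <= B by apply: sumr_ge0 => i _; exact: sqr_ge0.
have E : \sum_i (a i + b i) ^+ 2 = A + 2 * P + B.
  rewrite /A /B /P mulr_sumr -!big_split; apply: eq_bigr => i _ /=; ring.
have HP : P <= Num.sqrt A * Num.sqrt B.
  apply: (le_trans (ler_norm P)).
  rewrite -sqrtrM // -sqrtr_sqr ler_sqrt; last by rewrite mulr_ge0.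
  exact: cs_sq.
have sA := sqrtr_ge0 A; have sB := sqrtr_ge0 B.
rewrite E -[X in _ <= X]ger0_norm ?addr_ge0 // -sqrtr_sqr ler_sqrt ?sqr_ge0 //.
rewrite sqrrD !sqr_sqrtr //; lra.
Qed.

Lemma enorm_ge0 {p} (v : 'rV[R]_p) : 0 <= enorm v.
Proof. exact: sqrtr_ge0. Qed.

Lemma enormD {p} (u v : 'rV[R]_p) : enorm (u + v) <= enorm u + enorm v.
Proof.
rewrite /enorm; under eq_bigr do rewrite mxE; exact: minkowski.
Qed.

Lemma enormZ {p} c (v : 'rV[R]_p) : enorm (c *: v) = `|c| * enorm v.
Proof.
rewrite /enorm; under eq_bigr do rewrite mxE exprMn.
by rewrite -mulr_sumr sqrtrM ?sqr_ge0 // sqrtr_sqr.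
Qed.

Lemma enormN {p} (v : 'rV[R]_p) : enorm (- v) = enorm v.
Proof. by rewrite -scaleN1r enormZ normrN normr1 mul1r. Qed.

Lemma enorm_sym {p} (u v : 'rV[R]_p) : enorm (u - v) = enorm (v - u).
Proof. by rewrite -enormN opprB. Qed.

Lemma enorm0 {p} : enorm (0 : 'rV[R]_p) = 0.
Proof.
rewrite /enorm big1 ?sqrtr0 // => j _; rewrite mxE; exact: expr0n.
Qed.

Lemma enorm_sum {p} (I : finType) (f : I -> 'rV[R]_p) :
  enorm (\sum_i f i) <= \sum_i enorm (f i).
Proof.
apply: (big_rec2 (fun a b => enorm a <= b)); first by rewrite enorm0.
move=> i a b _ H; apply: (le_trans (enormD _ _)); exact: lerD.
Qed.

Lemma enorm_convex {p} (I : finType) (w : I -> R) (v : I -> 'rV[R]_p) D :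
  (forall j, 0 <= w j) -> \sum_j w j = 1 -> (forall j, enorm (v j) <= D) ->
  enorm (\sum_j w j *: v j) <= D.
Proof.
move=> w0 w1 vD; apply: (le_trans (enorm_sum _ (fun j => w j *: v j))).
apply: (@le_trans _ _ (\sum_j w j * D)).
  apply: ler_sum => j _; rewrite enormZ ger0_norm //; exact: ler_wpM2l.
by rewrite -mulr_suml w1 mul1r.
Qed.

Definition G {n p} (w : 'I_n -> 'rV[R]_p) := Num.sqrt (\sum_i enorm (w i) ^+ 2).

Lemma G_ge0 {n p} (w : 'I_n -> 'rV[R]_p) : 0 <= G w.
Proof. exact: sqrtr_ge0. Qed.

Lemma GD {n p} (u v : 'I_n -> 'rV[R]_p) :
  G (fun i => u i + v i) <= G u + G v.
Proof.
apply: le_trans (minkowski _ (fun i => enorm (u i)) (fun i => enorm (v i))).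
rewrite /G ler_sqrt; last by apply: sumr_ge0 => i _; exact: sqr_ge0.
apply: ler_sum => i _; apply: lerXn2r; rewrite ?nnegrE ?addr_ge0 ?enorm_ge0 //.
exact: enormD.
Qed.

Lemma GZ {n p} c (u : 'I_n -> 'rV[R]_p) : G (fun i => c *: u i) = `|c| * G u.
Proof.
rewrite /G (eq_bigr (fun i => c ^+ 2 * enorm (u i) ^+ 2)); last by move=> i _; rewrite enormZ exprMn real_normK // num_real.
by rewrite -mulr_sumr sqrtrM ?sqr_ge0 // sqrtr_sqr.
Qed.

Lemma G_bound {n p} (u : 'I_n -> 'rV[R]_p) D : 0 <= D ->
  (forall i, enorm (u i) <= D) -> G u <= Num.sqrt n%:R * D.
Proof.
move=> D0 uD; apply: (@le_trans _ _ (Num.sqrt (\sum_(i < n) D ^+ 2))).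
  rewrite /G ler_sqrt; last by apply: sumr_ge0 => i _; exact: sqr_ge0.
  apply: ler_sum => i _; apply: lerXn2r; rewrite ?nnegrE ?enorm_ge0 //.
rewrite sumr_const card_ord -[_ *+ n]mulr_natl sqrtrM ?ler0n // sqrtr_sqr ger0_norm //.
Qed.

Lemma G_each {n p} (u : 'I_n -> 'rV[R]_p) i : enorm (u i) <= G u.
Proof.
rewrite -[X in X <= _]ger0_norm ?enorm_ge0 // -sqrtr_sqr /G ler_sqrt;
  last by apply: sumr_ge0 => j _; exact: sqr_ge0.
rewrite (bigD1 i) //= lerDl; apply: sumr_ge0 => j _; exact: sqr_ge0.
Qed.

Lemma G_ext {n p} (u v : 'I_n -> 'rV[R]_p) : (forall i, u i = v i) -> G u = G v.
Proof. by move=> h; rewrite /G; under eq_bigr do rewrite h. Qed.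

Lemma cerr_G {n p} (z : 'I_n -> 'rV[R]_p) zb :
  consensus_err z zb = G (fun i => z i - zb).
Proof. by []. Qed.


Lemma conv_dist {p} (I : finType) (w : I -> R) (z : I -> 'rV[R]_p) a D :
  (forall j, 0 <= w j) -> \sum_j w j = 1 -> (forall j, enorm (a - z j) <= D) ->
  enorm (a - \sum_j w j *: z j) <= D.
Proof.
move=> w0 w1 zD.
have -> : a - \sum_j w j *: z j = \sum_j w j *: (a - z j).
  by rewrite (eq_bigr (fun j => w j *: a - w j *: z j) (fun j _ => scalerBr _ _ _))
    sumrB -scaler_suml w1 scale1r.
exact: enorm_convex.
Qed.

Lemma avgvE {n p} (z : 'I_n -> 'rV[R]_p) :
  avgv z = \sum_j n%:R^-1 *: z j.
Proof. by rewrite /avgv scaler_sumr. Qed.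

Lemma avg_dist {n p} (z : 'I_n -> 'rV[R]_p) a D : (0 < n)%N ->
  (forall j, enorm (a - z j) <= D) -> enorm (a - avgv z) <= D.
Proof.
move=> n0 zD; rewrite avgvE; apply: conv_dist zD.
  by move=> j; rewrite invr_ge0 ler0n.
by rewrite sumr_const card_ord -[n%:R^-1 *+ n]mulr_natr mulVf // pnatr_eq0 -lt0n.
Qed.

Lemma mix_dist {n p} (C : 'M[R]_n) (z : 'I_n -> 'rV[R]_p) i a D :
  doubly_stochastic C ->
  (forall j, enorm (a - z j) <= D) -> enorm (a - mixv C z i) <= D.
Proof.
move=> [C0 [Cr Cc]] zD; rewrite /mixv; exact: conv_dist.
Qed.

Lemma avgv_mix {n p} (C : 'M[R]_n) (z : 'I_n -> 'rV[R]_p) :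
  doubly_stochastic C -> avgv (mixv C z) = avgv z.
Proof.
move=> [C0 [Cr Cc]]; rewrite /avgv /mixv exchange_big /=; congr (_ *: _).
by apply: eq_bigr => j _; rewrite -scaler_suml Cc scale1r.
Qed.

Lemma avgv_lin {n p} (u v : 'I_n -> 'rV[R]_p) a b :
  avgv (fun j => a *: u j + b *: v j) = a *: avgv u + b *: avgv v.
Proof.
by rewrite /avgv big_split /= -!scaler_sumr scalerDr !scalerA mulrC [_ * b]mulrC.
Qed.

Lemma qT (a b : R) : 1 <= a -> 1 <= b ->
  (a / (a + 1)) ^+ 2 * (2 * a * b / (b + 2) ^+ 2 + 2 / (b + 2)) <= 2 * a / (b + 3).
Proof.
move=> a1 b1.
have h1 : a + 1 != 0 by apply/eqP; lra.
have h2 : b + 2 != 0 by apply/eqP; lra.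
have h3 : b + 3 != 0 by apply/eqP; lra.
rewrite -subr_ge0.
have -> : 2 * a / (b + 3) - (a / (a + 1)) ^+ 2 * (2 * a * b / (b + 2) ^+ 2 + 2 / (b + 2))
  = (2 * a * (b * (a+1)^+2 + (a+1) * (4*a-2) + b^+2 * (a+1) + b * (a+1) + 2 * b + 6))
    / ((b + 3) * (a + 1) ^+ 2 * (b + 2) ^+ 2).
  by field; rewrite ?h1 ?h2 ?h3 //= ?mulf_neq0 ?expf_neq0.
apply: divr_ge0.
  apply: mulr_ge0; first lra.
  have : 0 <= b * (a+1)^+2 by apply: mulr_ge0; [lra | exact: sqr_ge0].
  have : 0 <= (a+1) * (4*a-2) by apply: mulr_ge0; lra.
  have : 0 <= b^+2 * (a+1) by apply: mulr_ge0; [exact: sqr_ge0 | lra].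
  have : 0 <= b * (a+1) by apply: mulr_ge0; lra.
  lra.
apply: mulr_ge0; [apply: mulr_ge0; [lra | exact: sqr_ge0] | exact: sqr_ge0].
Qed.

Lemma qbase (a : R) : 1 <= a -> (a / (a + 1)) ^+ 2 <= 2 * a / 3.
Proof.
move=> a1.
have h1 : a + 1 != 0 by apply/eqP; lra.
rewrite -subr_ge0.
have -> : 2 * a / 3 - (a / (a + 1)) ^+ 2 = a * (2 * a^+2 + a + 2) / (3 * (a + 1) ^+ 2).
  by field; rewrite ?h1 //= ?mulf_neq0 ?expf_neq0.
apply: divr_ge0; last by apply: mulr_ge0; [lra | exact: sqr_ge0].
apply: mulr_ge0; first lra.
have : 0 <= a ^+ 2 by exact: sqr_ge0.
lra.
Qed.


Lemma step_num (a b mu S E E' : R) : 1 <= a -> 1 <= b -> 0 <= S -> 0 <= mu ->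
  mu <= (a / (a + 1)) ^+ 2 -> mu * E <= 2 * a * S / (b + 2) ->
  E' <= (1 - 2 / (b + 2)) * (mu * E) + 2 / (b + 2) * S ->
  mu * E' <= 2 * a * S / (b + 1 + 2).
Proof.
move=> a1 b1 S0 mu0 muq hE hE'.
have h2 : b + 2 != 0 by apply/eqP; lra.
have eta0 : 0 <= 1 - 2 / (b + 2).
  have -> : 1 - 2 / (b + 2) = b / (b + 2) by field.
  apply: divr_ge0; lra.
apply: (@le_trans _ _ (mu * ((1 - 2 / (b + 2)) * (2 * a * S / (b + 2)) + 2 / (b + 2) * S))).
  apply: ler_wpM2l => //; apply: (le_trans hE'); apply: lerD => //.
  exact: ler_wpM2l.
have T0 : 0 <= 2 * a * b / (b + 2) ^+ 2 + 2 / (b + 2).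
  apply: addr_ge0; apply: divr_ge0; rewrite ?sqr_ge0 //; try lra.
  by apply: mulr_ge0; lra.
have -> : mu * ((1 - 2 / (b + 2)) * (2 * a * S / (b + 2)) + 2 / (b + 2) * S)
  = mu * (S * (2 * a * b / (b + 2) ^+ 2 + 2 / (b + 2))) by field.
apply: (@le_trans _ _ ((a / (a + 1)) ^+ 2 * (S * (2 * a * b / (b + 2) ^+ 2 + 2 / (b + 2))))).
  by apply: ler_wpM2r => //; apply: mulr_ge0.
rewrite mulrCA.
have -> : 2 * a * S / (b + 1 + 2) = S * (2 * a / (b + 3)).
  have h3 : b + 3 != 0 by apply/eqP; lra.
  have h3' : b + 1 + 2 != 0 by apply/eqP; lra.
  by field.
by apply: ler_wpM2l => //; exact: qT.
Qed.

Lemma final_num (a b s D : R) : 0 <= a -> 1 <= b -> 0 <= s -> 0 <= D ->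
  2 * a * (s * D) / (b + 1 + 2) + 2 / (b + 2) * D + 2 * a * (s * D) / (b + 2)
    <= 2 * (D + 2 * (a * s * D)) / (b + 2).
Proof.
move=> a0 b1 s0 D0.
have h2 : b + 2 != 0 by apply/eqP; lra.
have h3 : b + 1 + 2 != 0 by apply/eqP; lra.
rewrite -subr_ge0.
have E : 2 * (D + 2 * (a * s * D)) / (b + 2) -
  (2 * a * (s * D) / (b + 1 + 2) + 2 / (b + 2) * D + 2 * a * (s * D) / (b + 2))
  = 2 * a * (s * D) / ((b + 2) * (b + 1 + 2)).
  by field; rewrite h2 h3.
rewrite E.
apply: divr_ge0; last by apply: mulr_ge0; lra.
by apply: mulr_ge0; [apply: mulr_ge0; lra | apply: mulr_ge0].
Qed.


Lemma comb_sub {p} (c : R) (u v a : 'rV[R]_p) :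
  (1 - c) *: u + c *: v - a = (1 - c) *: (u - a) + c *: (v - a).
Proof.
by rewrite scalerBr [c *: (v - a)]scalerBr addrACA -opprD -scalerDl subrK scale1r.
Qed.

Lemma comb_sub2 {p} (c : R) (u v a b : 'rV[R]_p) :
  (1 - c) *: u + c *: v - ((1 - c) *: a + c *: b) = (1 - c) *: (u - a) + c *: (v - b).
Proof. by rewrite opprD addrACA -!scalerBr. Qed.

Lemma comb_sub3 {p} (c : R) (b t : 'rV[R]_p) :
  (1 - c) *: b + c *: t - b = c *: (t - b).
Proof.
by rewrite scalerBl scale1r scalerBr addrAC [b - _ - b]addrAC subrr add0r addrC.
Qed.

Lemma enorm_comb {p} (c D : R) (u v a : 'rV[R]_p) : 0 <= c <= 1 ->
  enorm (u - a) <= D -> enorm (v - a) <= D ->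
  enorm ((1 - c) *: u + c *: v - a) <= D.
Proof.
move=> /andP [c0 c1] hu hv; rewrite comb_sub.
apply: (le_trans (enormD _ _)); rewrite !enormZ !ger0_norm ?subr_ge0 //.
apply: (@le_trans _ _ ((1 - c) * D + c * D)); last by rewrite -mulrDl subrK mul1r.
apply: lerD; apply: ler_wpM2l => //; by rewrite subr_ge0.
Qed.

Lemma split3 {p} (u v w1 w2 : 'rV[R]_p) :
  u - v = (u - w1) + ((w1 - w2) + (w2 - v)).
Proof. by rewrite !addrA !subrK. Qed.


End Aux.

Theorem lemma7
  (R : realType) (n p : nat)
  (* communication graph and weight matrix *)
  (E : rel 'I_n) (C : 'M[R]_n)
  (HG : connected_graph E) (HCsupp : supported_on C E)
  (HCds : doubly_stochastic C)
  (* lam = |lambda|, modulus of the second largest eigenvalue of C *)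
  (lam : R) (Hlam : second_eig_modulus C lam) (Hlam1 : lam < 1)
  (Hcontr : forall z : 'I_n -> 'rV[R]_p,
      consensus_err (mixv C z) (avgv z) <= lam * consensus_err z (avgv z))
  (* k0 = smallest positive integer with |lambda| <= (k0/(k0+1))^2 *)
  (k0 : nat) (Hk0pos : (0 < k0)%N)
  (Hk0 : lam <= (k0%:R / (k0.+1)%:R) ^+ 2)
  (Hk0min : forall k : nat, (0 < k)%N -> (k < k0)%N ->
      ~ (lam <= (k%:R / (k.+1)%:R) ^+ 2))
  (* constraint set *)
  (X : set 'rV[R]_p) (D : R)
  (HXconv : convex_set X) (HXcomp : compact X)
  (HXdiam : forall a b, X a -> X b -> enorm (a - b) <= D)
  (* stochastic gradient oracles grad f_i(x, xi), with L-Lipschitz gradient *)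
  (Xi : Type) (gf : 'I_n -> 'rV[R]_p -> Xi -> 'rV[R]_p) (L : R)
  (HgfL : forall i xi a b, enorm (gf i a xi - gf i b xi) <= L * enorm (a - b))
  (* realization of the samples xi_k^i *)
  (xi : nat -> 'I_n -> Xi)
  (* step sizes *)
  (gamma eta : nat -> R)
  (Hgamma : forall k, (1 <= k)%N -> 0 < gamma k <= 1)
  (Heta : forall k, (1 <= k)%N -> eta k = 2 / (k%:R + 2))
  (* the DMFW iterates *)
  (x xhat y s pp theta : nat -> 'I_n -> 'rV[R]_p)
  (Hx1 : forall i, X (x 1%N i))
  (Hxhat : forall k i, (1 <= k)%N -> xhat k i = mixv C (x k) i)
  (Hy1 : forall i, y 1%N i = gf i (xhat 1%N i) (xi 1%N i))
  (Hs1 : forall i, s 1%N i = y 1%N i)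
  (Hy : forall k i, (2 <= k)%N ->
      y k i = (1 - gamma k) *: y k.-1 i + gf i (xhat k i) (xi k i)
              - (1 - gamma k) *: gf i (xhat k.-1 i) (xi k i))
  (Hs : forall k i, (2 <= k)%N ->
      s k i = mixv C (s k.-1) i + y k i - y k.-1 i)
  (Hp : forall k i, (1 <= k)%N -> pp k i = mixv C (s k) i)
  (Htheta : forall k i, (1 <= k)%N ->
      X (theta k i) /\ (forall phi, X phi -> dotv (pp k i) (theta k i) <= dotv (pp k i) phi))
  (Hxnext : forall k i, (1 <= k)%N ->
      x k.+1 i = xhat k i + eta k *: (theta k i - xhat k i)) :
  forall (i : 'I_n) (k : nat), (1 <= k)%N ->
    enorm (xhat k.+1 i - xhat k i)
      <= 2 * (D + 2 * (k0%:R * Num.sqrt n%:R * D)) / (k%:R + 2).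
Proof.
move=> i k hk.
have n0 : (0 < n)%N by apply: leq_ltn_trans (ltn_ord i).
have D0 : 0 <= D.
  by have := HXdiam _ _ (Hx1 i) (Hx1 i); rewrite subrr enorm0.
set S := Num.sqrt n%:R * D.
have S0 : 0 <= S by apply: mulr_ge0 => //; exact: sqrtr_ge0.
have a1 : 1 <= (k0%:R : R) by rewrite ler1n.
set mu := Num.max lam 0.
have mu0 : 0 <= mu by rewrite le_max lexx orbT.
have muq : mu <= (k0%:R / (k0%:R + 1)) ^+ 2.
  by rewrite natr1 ge_max Hk0 sqr_ge0.
have Hmu : forall z : 'I_n -> 'rV[R]_p,
    consensus_err (mixv C z) (avgv z) <= mu * consensus_err z (avgv z).
  move=> z; apply: le_trans (Hcontr z) _; apply: ler_wpM2r.
    exact: sqrtr_ge0.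
  by rewrite le_max lexx.
have Exh : forall k, (1 <= k)%N -> xhat k = mixv C (x k).
  by move=> k' hk'; apply/funext => j; exact: Hxhat.
have Heta01 : forall k, (1 <= k)%N -> 0 <= eta k <= 1.
  move=> k' hk'; rewrite Heta //.
  have h : 1 <= (k'%:R : R) by rewrite ler1n.
  apply/andP; split; first by apply: divr_ge0; lra.
  by rewrite ler_pdivrMr; lra.
have Exn : forall k, (1 <= k)%N ->
    x k.+1 = (fun j => (1 - eta k) *: xhat k j + eta k *: theta k j).
  move=> k' hk'; apply/funext => j.
  by rewrite Hxnext // scalerBr scalerBl scale1r addrCA addrC.
have Good : forall k, (1 <= k)%N -> forall l a, X a -> enorm (x k l - a) <= D.
  elim=> [//|k' IH] hk' l a Xa.
  case: k' IH hk' => [|k'] IH hk'; first exact: HXdiam (Hx1 l) Xa.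
  rewrite (Exn _ (isT : (1 <= k'.+1)%N)) /=.
  apply: enorm_comb; first exact: Heta01.
    rewrite Hxhat // enorm_sym; apply: mix_dist HCds _ => j.
    by rewrite enorm_sym; exact: IH.
  by apply: HXdiam => //; case: (Htheta k'.+1 l isT).
have Goodh : forall k, (1 <= k)%N -> forall l a, X a -> enorm (xhat k l - a) <= D.
  move=> k' hk' l a Xa; rewrite Hxhat // enorm_sym; apply: mix_dist HCds _ => j.
  by rewrite enorm_sym; exact: Good.
have ThD : forall k, (1 <= k)%N -> forall j l, enorm (theta k j - theta k l) <= D.
  move=> k' hk' j l; apply: HXdiam; [by case: (Htheta k' j hk') | by case: (Htheta k' l hk')].
have Ind : forall k, (1 <= k)%N ->
    mu * consensus_err (x k) (avgv (x k)) <= 2 * k0%:R * S / (k%:R + 2).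
  elim=> [//|k' IH] _.
  case: k' IH => [|k'] IH.
    have e1 : consensus_err (x 1%N) (avgv (x 1%N)) <= S.
      rewrite cerr_G; apply: G_bound => // j; apply: avg_dist => // l.
      exact: HXdiam (Hx1 j) (Hx1 l).
    apply: (le_trans (ler_wpM2l mu0 e1)).
    apply: (@le_trans _ _ (2 * k0%:R / 3 * S)).
      by apply: ler_wpM2r => //; apply: le_trans muq _; exact: qbase.
    have -> : 2 * k0%:R * S / (1%:R + 2) = 2 * k0%:R / 3 * S.
      by rewrite mulr1n; field.
    by [].
  have hk1 : (1 <= k'.+1)%N by [].
  have eE : consensus_err (x k'.+2) (avgv (x k'.+2)) <=
      (1 - 2 / (k'.+1%:R + 2)) * (mu * consensus_err (x k'.+1) (avgv (x k'.+1)))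
      + 2 / (k'.+1%:R + 2) * S.
    rewrite (Exn _ hk1) avgv_lin (Exh _ hk1) avgv_mix // -(Exh _ hk1) cerr_G.
    rewrite (@G_ext _ _ _ _ (fun j => (1 - eta k'.+1) *: (xhat k'.+1 j - avgv (x k'.+1))
                   + eta k'.+1 *: (theta k'.+1 j - avgv (theta k'.+1)))); last first.
      by move=> j /=; exact: comb_sub2.
    apply: le_trans (GD _ _) _; rewrite !GZ.
    have /andP [c0 c1] := Heta01 _ hk1.
    rewrite !ger0_norm ?subr_ge0 // Heta //.
    apply: lerD.
      apply: ler_wpM2l; first by rewrite -Heta // subr_ge0.
      rewrite -cerr_G (Exh _ hk1); exact: Hmu.
    apply: ler_wpM2l; first by rewrite -Heta.
    apply: G_bound => // j; apply: avg_dist => // l; exact: ThD.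
  have hb : 1 <= (k'.+1%:R : R) by rewrite ler1n.
  have := @step_num _ _ _ _ _ _ _ a1 hb S0 mu0 muq (IH hk1) eE.
  by rewrite natr1.
have hk1 : (1 <= k.+1)%N by [].
rewrite (split3 _ _ (avgv (x k.+1)) (avgv (x k))).
apply: (le_trans (enormD _ _)); apply: (le_trans (lerD (lexx _) (enormD _ _))).
have h1 : enorm (xhat k.+1 i - avgv (x k.+1)) <= 2 * k0%:R * S / (k%:R + 1 + 2).
  rewrite natr1 Hxhat //.
  have := G_each (fun j => mixv C (x k.+1) j - avgv (x k.+1)) i => /= h.
  apply: (le_trans h); rewrite -cerr_G; apply: le_trans (Hmu _) _; exact: Ind.
have h3 : enorm (avgv (x k) - xhat k i) <= 2 * k0%:R * S / (k%:R + 2).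
  rewrite enorm_sym Hxhat //.
  have := G_each (fun j => mixv C (x k) j - avgv (x k)) i => /= h.
  apply: (le_trans h); rewrite -cerr_G; apply: le_trans (Hmu _) _; exact: Ind.
have h2 : enorm (avgv (x k.+1) - avgv (x k)) <= 2 / (k%:R + 2) * D.
  rewrite (Exn _ hk) avgv_lin (Exh _ hk) avgv_mix // comb_sub3 enormZ.
  have /andP [c0 c1] := Heta01 _ hk.
  rewrite ger0_norm // -Heta //; apply: ler_wpM2l => //.
  rewrite -(avgv_mix C (x k) HCds) -(Exh _ hk); apply: avg_dist => // j.
  rewrite enorm_sym; apply: avg_dist => // l; apply: Goodh => //.
  by case: (Htheta k l hk).
have hb : 1 <= (k%:R : R) by rewrite ler1n.
apply: le_trans (@final_num _ _ _ _ _ (ler0n _ k0) hb (sqrtr_ge0 n%:R) D0).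
rewrite -/S addrA; apply: lerD; [apply: lerD|]; done.
Qed.
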